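(* Let $\Gamma=A\ast B$ with $A,B$ non-trivial, let $f=f_A\ast f_B$ be a split quasimorphism with homogenization $\widehat f$ and bounded cohomology class $\omega_f=[\partial f]_\mathrm{b}\in\mathrm{H}^2_\mathrm{b}(\Gamma,\mathbb{R})$. Then \[ \|\omega_f\|=\tfrac12\,\mathrm{def}\,\widehat f=\mathrm{def}\, f=\max\{\mathrm{def}\, f_A,\mathrm{def}\, f_B\}. \] In particular, $f$ is a minimal defect representative for its class.
   Context: A quasimorphism is a map $f:\Gamma\to\mathbb{R}$ with $\mathrm{def}\, f=\sup_{g,h}|f(gh)-f(g)-f(h)|<\infty$; it is alternating if $f(g^{-1})=-f(g)$. Its homogenization is $\widehat f(g)=\lim_{n\to\infty}f(g^n)/n$. $\omega_f$ is the class in second bounded cohomology (bounded bar complex, trivial coefficients) of the bounded 2-cocycle $\partial f(g,h)=f(g)+f(h)-f(gh)$, and the Gromov norm is $\|\omega_f\|=\inf\{\mathrm{def}\,(f+\beta):\beta:\Gamma\to\mathbb{R}\text{ bounded}\}$. Each $1\neq g\in A\ast B$ has a unique normal form $g=a_1b_1\cdots a_nb_n$ ($a_i\in A$, $b_i\in B$, all non-trivial except possibly $a_1$ or $b_n$). For alternating quasimorphisms $f_A,f_B$ on $A,B$ the split quasimorphism is $f(1)=0$, $f(a_1b_1\cdots a_nb_n)=f_A(a_1)+f_B(b_1)+\dots+f_A(a_n)+f_B(b_n)$. *)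

(* Defs.v *)
From mathcomp Require Import all_boot all_order all_algebra.
From mathcomp Require Import all_classical all_reals all_analysis.
Set Implicit Arguments. Unset Strict Implicit. Unset Printing Implicit Defensive.
Import Order.TTheory GRing.Theory Num.Theory.
Import numFieldNormedType.Exports.
Local Open Scope classical_set_scope.
Local Open Scope ring_scope.

Section Quasi.
Variables (R : realType) (G : Type) (mul : G -> G -> G).

Definition defect_set (f : G -> R) : set R :=
  [set r | exists g h, r = `|f (mul g h) - f g - f h|].

Definition is_quasimorphism (f : G -> R) : Prop :=
  exists M : R, forall g h, `|f (mul g h) - f g - f h| <= M.

Definition defect (f : G -> R) : R := sup (defect_set f).

Definition bounded_cochain (beta : G -> R) : Prop :=
  exists M : R, forall g, `|beta g| <= M.

(* Gromov norm of omega_f = [d f]_b :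
   inf { def (f + beta) : beta : G -> R bounded } *)
Definition gromov_norm_class (f : G -> R) : R :=
  inf [set r | exists beta : G -> R, bounded_cochain beta /\ r = defect (f \+ beta)].

End Quasi.

Definition alternating_qm (R : realType) (G : Type) (inv : G -> G) (f : G -> R) :=
  forall g, f (inv g) = - f g.

(* The free product A * B, realized by reduced words (normal forms)    *)
Section FreeProduct.
Variables A B : groupType.

Definition letter := (A + B)%type.

Definition nontriv (x : letter) : bool :=
  match x with inl a => a != 1%g | inr b => b != 1%g end.

Definition same_side (x y : letter) : bool :=
  match x, y with inl _, inl _ => true | inr _, inr _ => true | _, _ => false end.

Fixpoint reduced (w : seq letter) : bool :=
  match w with
  | [::] => true
  | x :: w' => [&& nontriv x, reduced w' &
                  (match w' with y :: _ => ~~ same_side x y | [::] => true end)]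
  end.

Definition cons_letter (x : letter) (w : seq letter) : seq letter :=
  match x with
  | inl a => if a == 1%g then w else
      match w with
      | inl a' :: w' => if (a * a')%g == 1%g then w' else inl (a * a')%g :: w'
      | _ => inl a :: w
      end
  | inr b => if b == 1%g then w else
      match w with
      | inr b' :: w' => if (b * b')%g == 1%g then w' else inr (b * b')%g :: w'
      | _ => inr b :: w
      end
  end.

Lemma cons_letter_reduced x w : reduced w -> reduced (cons_letter x w).
Proof.
case: x => [a|b] /=.
- case: eqP => [//|/eqP a1].
  case: w => [|[a'|b'] w'] /=; first by rewrite a1.
  + move=> /and3P[_ rw' h]; case: eqP => [_|/eqP c1] //=.
    by rewrite c1 rw' /=; case: w' h {rw'} => [|[]].
  + by move=> ->; rewrite a1.
- case: eqP => [//|/eqP b1].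
  case: w => [|[a'|b'] w'] /=; first by rewrite b1.
  + by move=> ->; rewrite b1.
  + move=> /and3P[_ rw' h]; case: eqP => [_|/eqP c1] //=.
    by rewrite c1 rw' /=; case: w' h {rw'} => [|[]].
Qed.

Definition free_product := {w : seq letter | reduced w}.

Definition fp_one : free_product := exist _ [::] isT.

Lemma foldr_cons_reduced (w1 w2 : seq letter) :
  reduced w2 -> reduced (foldr cons_letter w2 w1).
Proof. by elim: w1 => //= x w1 IH r2; apply: cons_letter_reduced; apply: IH. Qed.

Definition fp_mul (g h : free_product) : free_product :=
  exist _ (foldr cons_letter (sval h) (sval g))
        (foldr_cons_reduced (sval g) (svalP h)).

Definition inv_letter (x : letter) : letter :=
  match x with inl a => inl (a^-1)%g | inr b => inr (b^-1)%g end.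

Lemma foldl_inv_reduced (acc w : seq letter) :
  reduced acc -> reduced (foldl (fun acc x => cons_letter (inv_letter x) acc) acc w).
Proof.
by elim: w acc => //= x w IH acc racc; apply: IH; apply: cons_letter_reduced.
Qed.

Definition fp_inv (g : free_product) : free_product :=
  exist _ (foldl (fun acc x => cons_letter (inv_letter x) acc) [::] (sval g))
        (foldl_inv_reduced (sval g) (isT : reduced [::])).

Definition fp_pow (g : free_product) (n : nat) : free_product :=
  iter n (fp_mul g) fp_one.

Variable R : realType.

Definition split_qm (fA : A -> R) (fB : B -> R) (g : free_product) : R :=
  \sum_(x <- sval g) (match x with inl a => fA a | inr b => fB b end).

Definition homogenization (f : free_product -> R) (g : free_product) : R :=
  limn (fun n : nat => f (fp_pow g n) / n%:R).

End FreeProduct.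

(* Main.v *)
Require Import Defs.
From mathcomp Require Import all_boot all_order all_algebra.
From mathcomp Require Import all_classical all_reals all_analysis.
From mathcomp Require Import ring lra.
Import Order.TTheory GRing.Theory Num.Theory.
Import numFieldNormedType.Exports.
Local Open Scope classical_set_scope.
Local Open Scope ring_scope.
Lemma arch_le (R : realType) (x y C : R) :
  (forall k : nat, x <= y + C / k.+1%:R) -> x <= y.
Proof.
move=> H; rewrite leNgt; apply/negP => xy.
have [C0|C0] := leP C 0.
  have := H 0%N; rewrite divr1 => h; lra.
have hp : 0 < (x - y) / C by apply: divr_gt0; lra.
have [k hk] := ltr_add_invr hp; rewrite add0r in hk.
have := H k.
have : C * k.+1%:R^-1 < C * ((x - y) / C) by rewrite ltr_pM2l.
have -> : C * ((x - y) / C) = x - y by field; lra.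
set t := C * _; lra.
Qed.

Lemma norm_scale (R : realType) (a C : R) (m : nat) :
  `|m.+1%:R * a| <= C -> `|a| <= C / m.+1%:R.
Proof.
have mp : 0 < m.+1%:R :> R by rewrite ltr0n.
rewrite normrM gtr0_norm // => h.
by rewrite ler_pdivlMr // mulrC.
Qed.

Lemma norm_arch0 (R : realType) (a C : R) :
  (forall m : nat, `|a| <= C / m.+1%:R) -> a = 0.
Proof.
move=> h; apply/normr0_eq0/le_anti; rewrite normr_ge0 andbT.
by apply: (@arch_le _ _ _ C) => k; rewrite add0r.
Qed.
Section AbsGroup.
Variables (G : Type) (mul : G -> G -> G) (e : G) (inv : G -> G).
Hypotheses (mulA : forall x y z, mul x (mul y z) = mul (mul x y) z)
  (mul1 : forall x, mul e x = x) (mulr1 : forall x, mul x e = x)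
  (mulV : forall x, mul (inv x) x = e) (mulVr : forall x, mul x (inv x) = e).

Definition gpow (g : G) (n : nat) := iter n (mul g) e.

Lemma gpowS g n : gpow g n.+1 = mul g (gpow g n). Proof. by []. Qed.

Lemma gpowD g n m : gpow g (n + m) = mul (gpow g n) (gpow g m).
Proof. by elim: n => [|n IH] /=; rewrite ?mul1 // IH mulA. Qed.

Lemma gpowM g n m : gpow g (n * m) = gpow (gpow g m) n.
Proof. by elim: n => [|n IH] //; rewrite mulSn gpowD IH. Qed.

Lemma gpow_conj x y n :
  gpow (mul (inv x) (mul y x)) n = mul (inv x) (mul (gpow y n) x).
Proof.
elim: n => [|n IH]; first by rewrite /= mul1 mulV.
rewrite gpowS IH gpowS.
rewrite !mulA; congr (mul _ x); rewrite -!mulA; congr (mul (inv x)).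
by rewrite (mulA x) mulVr mul1.
Qed.

Variable R : realType.
Variables (psi : G -> R) (D : R).
Hypothesis hD : forall g h, `|psi (mul g h) - psi g - psi h| <= D.

Lemma D_ge0 : 0 <= D.
Proof. exact: le_trans (normr_ge0 _) (hD e e). Qed.

Lemma psi_e : `|psi e| <= D.
Proof. have := hD e e; rewrite mul1; have -> : psi e - psi e - psi e = - psi e by ring.
by rewrite normrN. Qed.

Lemma pow_bound g n : `|psi (gpow g n.+1) - n.+1%:R * psi g| <= n%:R * D.
Proof.
elim: n => [|n IH].
  by rewrite /gpow /= mulr1 mul1r subrr normr0 mul0r.
have h := hD g (gpow g n.+1); rewrite -gpowS in h.
have e1 : psi (gpow g n.+2) - n.+2%:R * psi g =
   (psi (gpow g n.+2) - psi g - psi (gpow g n.+1)) + (psi (gpow g n.+1) - n.+1%:R * psi g).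
  by rewrite !mulrSr; ring.
rewrite e1; apply: le_trans (ler_normD _ _) _.
apply: le_trans (lerD h IH) _.
rewrite le_eqVlt; apply/orP; left; apply/eqP; rewrite -[n.+1]addn1 natrD; ring.
Qed.

Definition useq g (n : nat) := psi (gpow g n) / n%:R.

Lemma useq_close1 g n m : `|useq g (n.+1 * m.+1) - useq g m.+1| <= D / m.+1%:R.
Proof.
rewrite /useq gpowM.
have h := pow_bound (gpow g m.+1) n.
have np : 0 < n.+1%:R :> R by rewrite ltr0n.
have mp : 0 < m.+1%:R :> R by rewrite ltr0n.
set a := psi _ in h *; set b := psi (gpow g m.+1) in h *.
have e1 : a / (n.+1 * m.+1)%:R - b / m.+1%:R = (a - n.+1%:R * b) / (n.+1%:R * m.+1%:R).
  by rewrite natrM; field; apply/andP; split; rewrite gt_eqF.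
rewrite e1 normrM normfV (gtr0_norm (mulr_gt0 np mp)).
rewrite ler_pdivrMr ?mulr_gt0 //.
apply: (le_trans h).
have -> : D / m.+1%:R * (n.+1%:R * m.+1%:R) = n.+1%:R * D by field; rewrite gt_eqF.
by rewrite ler_wpM2r ?D_ge0 // ler_nat.
Qed.

Lemma useq_close g n m : `|useq g n.+1 - useq g m.+1| <= D / n.+1%:R + D / m.+1%:R.
Proof.
have h1 := useq_close1 g n m.
have h2 := useq_close1 g m n; rewrite mulnC in h2.
set z := useq g (n.+1 * m.+1) in h1 h2 *.
rewrite (_ : useq g n.+1 - useq g m.+1 = (z - useq g m.+1) - (z - useq g n.+1)); last by ring.
apply: le_trans (ler_normB _ _) _.
by rewrite addrC; apply: lerD.
Qed.

Lemma Ddiv_le k n : (k <= n)%N -> D / n.+1%:R <= D / k.+1%:R.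
Proof.
move=> kn; rewrite ler_wpM2l ?D_ge0 // lef_pV2 ?posrE ?ltr0n // ler_nat; by [].
Qed.

Lemma useq_cvg g : cvg (useq g n @[n --> \oo]).
Proof.
apply: R_complete; apply: cauchy_exP => eps eps0.
have Cp : 0 < (D + D + 1) by have := D_ge0; lra.
have [k hk] := ltr_add_invr (divr_gt0 eps0 Cp); rewrite add0r in hk.
exists (useq g k.+1); exists k.+1 => // -[//|n] /= hn.
rewrite /ball /=.
apply: le_lt_trans (useq_close g k n) _.
have h1 := @Ddiv_le k n hn.
have : (D + D + 1) * k.+1%:R^-1 < (D + D + 1) * (eps / (D + D + 1)) by rewrite ltr_pM2l.
have -> : (D + D + 1) * (eps / (D + D + 1)) = eps by field; rewrite gt_eqF.
have : 0 <= k.+1%:R^-1 :> R by rewrite invr_ge0.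
move: h1; rewrite /= !mulrDl mul1r.
set a := D / n.+1%:R; set b := D / k.+1%:R; set c := k.+1%:R^-1.
lra.
Qed.

Definition hom g := lim (useq g n @[n --> \oo]).

Lemma hom_close g m : `|hom g - useq g m.+1| <= D / m.+1%:R.
Proof.
have k1 : useq g m.+1 - D / m.+1%:R <= hom g.
  apply: (@arch_le _ _ _ D) => k.
  rewrite -lerBlDr.
  apply: limr_ge; first exact: useq_cvg.
  exists k.+1 => // -[//|n] /= hn.
  have := useq_close g n m; rewrite ler_norml => /andP[h _].
  move: h; have := @Ddiv_le k n hn; set a := D / n.+1%:R; set b := D / k.+1%:R.
  set c := D / m.+1%:R; lra.
have k2 : hom g <= useq g m.+1 + D / m.+1%:R.
  apply: (@arch_le _ _ _ D) => k.
  apply: limr_le; first exact: useq_cvg.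
  exists k.+1 => // -[//|n] /= hn.
  have := useq_close g n m; rewrite ler_norml => /andP[_ h].
  move: h; have := @Ddiv_le k n hn; set a := D / n.+1%:R; set b := D / k.+1%:R.
  set c := D / m.+1%:R; lra.
move: k1 k2; set c := D / m.+1%:R => k1 k2.
rewrite ler_norml; apply/andP; split; lra.
Qed.

Lemma useq1 g : useq g 1 = psi g.
Proof. by rewrite /useq /gpow /= mulr1 divr1. Qed.

Lemma hom_psi g : `|hom g - psi g| <= D.
Proof. by have := hom_close g 0; rewrite useq1 divr1. Qed.

Lemma npow_close g m : `|psi (gpow g m.+1) - m.+1%:R * hom g| <= D.
Proof.
have := hom_close g m; rewrite /useq.
have mp : 0 < m.+1%:R :> R by rewrite ltr0n.
have -> : hom g - psi (gpow g m.+1) / m.+1%:R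
  = - ((psi (gpow g m.+1) - m.+1%:R * hom g) / m.+1%:R) by field; rewrite gt_eqF.
by rewrite normrN normrM normfV (gtr0_norm mp) ler_pM2r ?invr_gt0.
Qed.

Lemma conj_bound x z :
  `|psi (mul (inv x) (mul z x)) - psi z| <= D + D + `|psi (inv x)| + `|psi x|.
Proof.
have h1 := hD (inv x) (mul z x); have h2 := hD z x.
move: h1 h2; set a := psi (mul (inv x) (mul z x)); set b := psi (mul z x).
rewrite !ler_norml => /andP[h1 h1'] /andP[h2 h2'].
have := normr_ge0 (psi (inv x)); have := normr_ge0 (psi x).
have := ler_norm (psi (inv x)); have := ler_norm (psi x).
have := ler_normr (psi (inv x)) (psi (inv x)); have := ler_normr (psi x) (psi x).
rewrite !lexx /= => _ _.
have := ler_norm (- psi (inv x)); have := ler_norm (- psi x); rewrite !normrN.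
lra.
Qed.

Lemma hom_conj x y : hom (mul (inv x) (mul y x)) = hom y.
Proof.
apply/eqP; rewrite -subr_eq0; apply/eqP.
apply: (@norm_arch0 _ _ (D + D + (D + D + `|psi (inv x)| + `|psi x|))) => m.
apply: norm_scale.
have h1 := npow_close (mul (inv x) (mul y x)) m.
have h2 := npow_close y m.
have h3 := conj_bound x (gpow y m.+1).
rewrite gpow_conj in h1.
move: h1 h2 h3.
set a := psi _; set b := psi (gpow y m.+1).
set c := m.+1%:R * hom _; set d := m.+1%:R * hom y.
rewrite mulrBr -/c -/d.
move=> h1 h2 h3.
have : `|c - d| <= `|a - c| + `|b - d| + `|a - b|.
  have -> : c - d = - (a - c) + (b - d) + (a - b) by ring.
  by rewrite (le_trans (ler_normD _ _)) // lerD // (le_trans (ler_normD _ _)) // normrN.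
lra.
Qed.

Definition bj g h j := mul (inv (gpow g j)) (mul h (gpow g j)).
Fixpoint Qs g h n := match n with 0%N => e | k.+1 => mul (bj g h k) (Qs g h k) end.

Lemma pow_decomp g h n : gpow (mul g h) n = mul (gpow g n) (Qs g h n).
Proof.
elim: n => [|n IH]; first by rewrite /= mul1.
rewrite gpowS IH gpowS /= /bj.
rewrite !mulA; congr (mul _ (Qs g h n)).
congr (mul _ (gpow g n)).
by rewrite -(mulA g) mulVr mulr1.
Qed.

Lemma Qs_bound g h n :
  `|psi (Qs g h n) - \sum_(j < n) psi (bj g h j)| <= n.+1%:R * D.
Proof.
elim: n => [|n IH]; first by rewrite big_ord0 subr0 mul1r psi_e.
rewrite big_ord_recr /= addrC.
have h1 := hD (bj g h n) (Qs g h n).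
have -> : psi (mul (bj g h n) (Qs g h n)) - (psi (bj g h n) + \sum_(i < n) psi (bj g h i))
  = (psi (mul (bj g h n) (Qs g h n)) - psi (bj g h n) - psi (Qs g h n))
    + (psi (Qs g h n) - \sum_(i < n) psi (bj g h i)) by ring.
apply: le_trans (ler_normD _ _) _.
apply: le_trans (lerD h1 IH) _.
rewrite le_eqVlt; apply/orP; left; apply/eqP; rewrite -[n.+2]addn1 natrD; ring.
Qed.

Lemma sum_bound g h n :
  `|\sum_(j < n) psi (bj g h j) - n%:R * hom h| <= n%:R * D.
Proof.
elim: n => [|n IH]; first by rewrite big_ord0 mul0r subr0 normr0 mul0r.
rewrite big_ord_recr /=.
have h1 : `|psi (bj g h n) - hom h| <= D.
  by rewrite /bj -(hom_conj (gpow g n) h) distrC hom_psi.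
have -> : \sum_(i < n) psi (bj g h i) + psi (bj g h n) - n.+1%:R * hom h
  = (\sum_(i < n) psi (bj g h i) - n%:R * hom h) + (psi (bj g h n) - hom h)
  by rewrite -[n.+1]addn1 natrD; ring.
apply: le_trans (ler_normD _ _) _.
apply: le_trans (lerD IH h1) _.
rewrite le_eqVlt; apply/orP; left; apply/eqP; rewrite -[n.+1]addn1 natrD; ring.
Qed.

Lemma hom_def g h : `|hom (mul g h) - hom g - hom h| <= D + D.
Proof.
apply: (@arch_le _ _ _ ((4%:R * D))) => m.
set n := m.+1.
have mp : 0 < n%:R :> R by rewrite ltr0n.
have h1 := hD (gpow g n) (Qs g h n); rewrite -pow_decomp in h1.
have h2 := npow_close (mul g h) m.
have h3 := npow_close g m.
have h4 := Qs_bound g h n.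
have h5 := sum_bound g h n.
rewrite -/n in h2 h3.
have key : `|n%:R * (hom (mul g h) - hom g - hom h)| <= (n%:R + n%:R + 4%:R) * D.
  move: h1 h2 h3 h4 h5.
  set a := psi (gpow (mul g h) n); set b := psi (gpow g n); set c := psi (Qs g h n).
  set S := \sum_(j < n) _.
  have -> : n%:R * (hom (mul g h) - hom g - hom h)
    = - (a - n%:R * hom (mul g h)) + (b - n%:R * hom g) + (c - S) + (S - n%:R * hom h)
      + (a - b - c) by ring.
  move=> h1 h2 h3 h4 h5.
  apply: le_trans (ler_normD _ _) _.
  apply: le_trans (lerD (ler_normD _ _) (lexx _)) _.
  apply: le_trans (lerD (lerD (ler_normD _ _) (lexx _)) (lexx _)) _.
  apply: le_trans (lerD (lerD (lerD (ler_normD _ _) (lexx _)) (lexx _)) (lexx _)) _.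
  rewrite normrN.
  have := D_ge0.
  move: h1 h2 h3 h4 h5.
  rewrite /n -[m.+2]addn1 natrD.
  set t := m.+1%:R.
  set A1 := `|a - b - c|; set A2 := `|a - _|; set A3 := `|b - _|; set A4 := `|c - S|; set A5 := `|S - _|.
  have -> : (t + 1) * D = t * D + D by ring.
  have -> : (t + t + 4%:R) * D = t * D + t * D + (4%:R * D) by ring.
  set tD := t * D. lra.
have := @norm_scale _ _ _ m key.
have -> : (n%:R + n%:R + 4%:R) * D / n%:R = D + D + (4%:R * D) / n%:R.
  by field; rewrite gt_eqF.
by [].
Qed.

End AbsGroup.
Section FPgroup.
Variables A B : groupType.

Local Notation letter := (letter A B).
Local Notation cons := (@cons_letter A B).
Local Notation red := (@reduced A B).

Lemma fp_eq (g h : free_product A B) : sval g = sval h -> g = h.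
Proof.
case: g h => [g pg] [h ph] /= e; subst h; congr exist; exact: bool_irrelevance.
Qed.

Lemma reduced_cons x w : red (x :: w) -> red w.
Proof. by case/and3P. Qed.

Arguments reduced_cons {x w}.

Lemma cons_prepend x w : red (x :: w) -> cons x w = x :: w.
Proof.
case: x => [a|b] /= /and3P[nt _ h]; move: nt h => /negPf nt.
- by rewrite nt; case: w => [|[a'|b'] w'].
- by rewrite nt; case: w => [|[a'|b'] w'].
Qed.

Arguments cons_prepend {x w}.

Lemma cons1A w : cons (inl 1%g) w = w.
Proof. by rewrite /= eqxx. Qed.

Lemma cons1B w : cons (inr 1%g) w = w.
Proof. by rewrite /= eqxx. Qed.

Lemma consAA (a a' : A) w : red w ->
  cons (inl a) (cons (inl a') w) = cons (inl (a * a')%g) w.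
Proof.
move=> rw.
have [->|a'1] := eqVneq a' 1%g; first by rewrite mulg1 cons1A.
have [->|a1] := eqVneq a 1%g; first by rewrite mul1g cons1A.
case: w rw => [|[c|c] w'] rw /=.
- by rewrite (negPf a'1) (negPf a1).
- move: rw => /= /and3P[c1 rw' hw'].
  rewrite (negPf a'1).
  have [e1|e1] := eqVneq (a' * c)%g 1%g.
  + (* a' c = 1 : then w' head not A *)
    have ec : c = (a'^-1)%g by rewrite -(mulKg a' c) e1 mulg1.
    rewrite (negPf a1).
    have [e2|e2] := eqVneq (a * a')%g 1%g.
      have -> : a = (a'^-1)%g by rewrite -(mulgK a' a) e2 mul1g.
      rewrite -ec.
      by case: w' {rw'} hw' => [|[]].
    rewrite -mulgA e1 mulg1 (negPf a1).
    by case: w' {rw'} hw' => [|[]].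
  + rewrite /= (negPf a1) -mulgA.
    have [e2|e2] := eqVneq (a * a')%g 1%g.
      have -> : a = (a'^-1)%g by rewrite -(mulgK a' a) e2 mul1g.
      by rewrite mulKg (negPf c1).
    done.
- by rewrite (negPf a'1) /= (negPf a1).
Qed.

Lemma consBB (a a' : B) w : red w ->
  cons (inr a) (cons (inr a') w) = cons (inr (a * a')%g) w.
Proof.
move=> rw.
have [->|a'1] := eqVneq a' 1%g; first by rewrite mulg1 cons1B.
have [->|a1] := eqVneq a 1%g; first by rewrite mul1g cons1B.
case: w rw => [|[c|c] w'] rw /=.
- by rewrite (negPf a'1) /= (negPf a1).
- by rewrite (negPf a'1) (negPf a1).
- move: rw => /= /and3P[c1 rw' hw'].
  rewrite (negPf a'1).
  have [e1|e1] := eqVneq (a' * c)%g 1%g.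
  +
    have ec : c = (a'^-1)%g by rewrite -(mulKg a' c) e1 mulg1.
    rewrite (negPf a1).
    have [e2|e2] := eqVneq (a * a')%g 1%g.
      have -> : a = (a'^-1)%g by rewrite -(mulgK a' a) e2 mul1g.
      rewrite -ec.
      by case: w' {rw'} hw' => [|[]].
    rewrite -mulgA e1 mulg1 (negPf a1).
    by case: w' {rw'} hw' => [|[]].
  + rewrite /= (negPf a1) -mulgA.
    have [e2|e2] := eqVneq (a * a')%g 1%g.
      have -> : a = (a'^-1)%g by rewrite -(mulgK a' a) e2 mul1g.
      by rewrite mulKg (negPf c1).
    done.
Qed.

Local Notation F := (foldr cons).

Lemma F_red s w : red w -> red (F w s).
Proof. exact: foldr_cons_reduced. Qed.

Lemma cons_fold x u k : red u -> red k -> F k (cons x u) = cons x (F k u).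
Proof.
move=> ru rk.
case: x => [a|b].
- have [->|a1] := eqVneq a 1%g; first by rewrite !cons1A.
  case: u ru => [|[c|c] u'] ru.
  + by rewrite /= (negPf a1) /= ?(negPf a1).
  + have ru' : red u' by move: ru => /= /and3P[].
    rewrite [cons _ (inl c :: u')]/= (negPf a1) [F k (inl c :: u')]/=.
    rewrite (consAA _ _ _ (F_red u' k rk)).
    have [e1|e2] := eqVneq (a * c)%g 1%g.
      by rewrite e1 /= eqxx.
    by [] || rewrite /= (negPf e2).
  + by rewrite /= (negPf a1) /= ?(negPf a1).
- have [->|b1] := eqVneq b 1%g; first by rewrite !cons1B.
  case: u ru => [|[c|c] u'] ru.
  + by rewrite /= (negPf b1) /= ?(negPf b1).
  + by rewrite /= (negPf b1) /= ?(negPf b1).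
  + have ru' : red u' by move: ru => /= /and3P[].
    rewrite [cons _ (inr c :: u')]/= (negPf b1) [F k (inr c :: u')]/=.
    rewrite (consBB _ _ _ (F_red u' k rk)).
    have [e1|e2] := eqVneq (b * c)%g 1%g.
      by rewrite e1 /= eqxx.
    by [] || rewrite /= (negPf e2).
Qed.

Lemma F_assoc g h k : red h -> red k -> F k (F h g) = F (F k h) g.
Proof.
move=> rh rk; elim: g => [//|x g IH] /=.
by rewrite cons_fold ?F_red // IH.
Qed.

Lemma F_nil g : red g -> F [::] g = g.
Proof.
elim: g => [//|x g IH] rg /=.
rewrite IH; [exact: cons_prepend rg|exact: reduced_cons rg].
Qed.

Lemma fp_mulA (x y z : free_product A B) :
  fp_mul x (fp_mul y z) = fp_mul (fp_mul x y) z.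
Proof. by apply: fp_eq => /=; rewrite (F_assoc _ _ _ (svalP y) (svalP z)). Qed.

Lemma fp_mul1 x : fp_mul (fp_one A B) x = x.
Proof. by apply: fp_eq. Qed.

Lemma fp_mulr1 x : fp_mul x (fp_one A B) = x.
Proof. by apply: fp_eq => /=; rewrite F_nil //; case: x. Qed.

Lemma foldl_inv_F acc g :
  foldl (fun acc x => cons (inv_letter x) acc) acc g = F acc (rev (map (@inv_letter A B) g)).
Proof.
elim: g acc => [//|x g IH] acc /=.
by rewrite IH rev_cons -cats1 foldr_cat.
Qed.

Lemma cancel_inv x g : red (x :: g) -> cons (inv_letter x) (x :: g) = g.
Proof.
case: x => [a|b] /= /and3P[nt _ _].
- by rewrite invg_eq1 (negPf nt) mulVg eqxx.
- by rewrite invg_eq1 (negPf nt) mulVg eqxx.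
Qed.

Lemma F_inv g : red g -> F g (rev (map (@inv_letter A B) g)) = [::].
Proof.
elim: g => [//|x g IH] rg /=.
rewrite rev_cons -cats1 foldr_cat /= cancel_inv //.
exact: IH (reduced_cons rg).
Qed.

Lemma fp_mulV x : fp_mul (fp_inv x) x = fp_one A B.
Proof.
apply: fp_eq => /=.
have rx := svalP x.
by rewrite foldl_inv_F F_assoc //= F_inv.
Qed.

Lemma fp_mulVr x : fp_mul x (fp_inv x) = fp_one A B.
Proof.
set y := fp_inv x; set z := fp_inv y.
rewrite -[fp_mul x y]fp_mul1 -{1}(fp_mulV y) -/z -fp_mulA (fp_mulA y x y).
by rewrite /y fp_mulV fp_mul1 fp_mulV.
Qed.

End FPgroup.
Section FPqm.
Variables (A B : groupType) (R : realType) (fA : A -> R) (fB : B -> R).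
Hypotheses (altA : alternating_qm (@monoid.inv A) fA)
           (altB : alternating_qm (@monoid.inv B) fB).
Variables (dA dB : R).
Hypotheses (hA : forall a a' : A, `|fA (a * a')%g - fA a - fA a'| <= dA)
           (hB : forall b b' : B, `|fB (b * b')%g - fB b - fB b'| <= dB).

Local Notation letter := (letter A B).
Local Notation cons := (@cons_letter A B).
Local Notation red := (@reduced A B).
Local Notation F := (foldr cons).

Definition val (x : letter) : R := match x with inl a => fA a | inr b => fB b end.
Definition sumv (w : seq letter) : R := \sum_(x <- w) val x.

Lemma fA1 : fA 1%g = 0.
Proof. have := altA 1%g; rewrite invg1 => h; lra. Qed.
Lemma fB1 : fB 1%g = 0.
Proof. have := altB 1%g; rewrite invg1 => h; lra. Qed.

Lemma fA_canc a a' : (a * a')%g = 1%g -> fA a + fA a' = 0.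
Proof. move=> e; have <- : (a^-1)%g = a' by exact: mulg1_eq. by rewrite altA subrr. Qed.
Lemma fB_canc b b' : (b * b')%g = 1%g -> fB b + fB b' = 0.
Proof. move=> e; have <- : (b^-1)%g = b' by exact: mulg1_eq. by rewrite altB subrr. Qed.

Arguments fA_canc {a a'}.
Arguments fB_canc {b b'}.

Definition Dm := Num.max dA dB.

Lemma dA_le : dA <= Dm. Proof. by rewrite /Dm le_max lexx. Qed.
Lemma dB_le : dB <= Dm. Proof. by rewrite /Dm le_max lexx orbT. Qed.
Lemma dA_ge0 : 0 <= dA.
Proof. by apply: le_trans (hA 1 1); rewrite normr_ge0. Qed.
Lemma Dm_ge0 : 0 <= Dm. Proof. exact: le_trans dA_ge0 dA_le. Qed.

Definition side (x : letter) : bool := if x is inl _ then true else false.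
Definition hs (w : seq letter) : option bool := if w is x :: _ then Some (side x) else None.

Lemma sumv_cons x w : sumv (x :: w) = val x + sumv w.
Proof. by rewrite /sumv big_cons. Qed.

Lemma step x w : red w -> nontriv x ->
  cons x w = x :: w \/
  (hs w = Some (side x) /\
   (val x + sumv w - sumv (cons x w) = 0 \/
    (`|val x + sumv w - sumv (cons x w)| <= Dm /\ hs (cons x w) = Some (side x)))).
Proof.
move=> rw; case: x => [a|b] /= nt.
- rewrite (negPf nt); case: w rw => [|[c|c] w'] rw; [by left|right|by left].
  split=> //.
  have [e|e] := eqVneq (a * c)%g 1%g.
    left; rewrite sumv_cons /=.
    have := fA_canc e; lra.
  right; rewrite ?(negPf e) !sumv_cons /=; split=> //.
  have -> : fA a + (fA c + sumv w') - (fA (a * c)%g + sumv w') = - (fA (a * c)%g - fA a - fA c) by ring.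
  by rewrite normrN (le_trans (hA _ _) dA_le).
- rewrite (negPf nt); case: w rw => [|[c|c] w'] rw; [by left|by left|right].
  split=> //.
  have [e|e] := eqVneq (b * c)%g 1%g.
    left; rewrite sumv_cons /=.
    have := fB_canc e; lra.
  right; rewrite ?(negPf e) !sumv_cons /=; split=> //.
  have -> : fB b + (fB c + sumv w') - (fB (b * c)%g + sumv w') = - (fB (b * c)%g - fB b - fB c) by ring.
  by rewrite normrN (le_trans (hB _ _) dB_le).
Qed.

Lemma hs_ne x g : red (x :: g) -> hs g <> Some (side x).
Proof.
case: g => [|y g] //= /and3P[_ _ ns] [].
by case: x y ns => [?|?] [?|?].
Qed.

Arguments hs_ne {x g}.

Lemma junction {g h} : red g -> red h ->
  let d := sumv g + sumv h - sumv (F h g) in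
  d = 0 \/ (`|d| <= Dm /\ hs (F h g) = hs g).
Proof.
move=> rg rh; elim: g rg => [|x g IH] rg /=.
  by left; rewrite /sumv big_nil; ring.
have rg' : red g by move: rg => /= /and3P[].
have ntx : nontriv x by move: rg => /= /and3P[].
have := IH rg'; rewrite /=; set w' := F h g => IHg.
rewrite sumv_cons.
have := step x (F h g) (foldr_cons_reduced g rh) ntx; rewrite -/w'.
case=> [-> | [hsw [d0|[dle hsc]]]].
- rewrite sumv_cons.
  case: IHg => [d0|[dle hsw]].
    by left; rewrite -d0; ring.
  right; split=> //.
  have -> : val x + sumv g + sumv h - (val x + sumv w') = sumv g + sumv h - sumv w' by ring.
  done.
- case: IHg => [d0'|[dle hsw']].
    left; move: d0 d0'; set s1 := sumv (cons x w'); lra.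
  exfalso; apply: (hs_ne rg); by rewrite -hsw' hsw.
- case: IHg => [d0'|[dle' hsw']].
    right; split; last by [].
    have -> : val x + sumv g + sumv h - sumv (cons x w') = val x + sumv w' - sumv (cons x w')
      by move: d0'; set s1 := sumv (cons x w'); lra.
    done.
  exfalso; apply: (hs_ne rg); by rewrite -hsw' hsw.
Qed.

Local Notation f := (split_qm fA fB).
Local Notation FPG := (free_product A B).

Lemma f_sumv (g : FPG) : f g = sumv (sval g).
Proof. by []. Qed.

Lemma f_bound (g h : FPG) : `|f (fp_mul g h) - f g - f h| <= Dm.
Proof.
rewrite !f_sumv /=.
have := junction (svalP g) (svalP h).
set d := sumv _ + _ - _.
have -> : sumv (F (sval h) (sval g)) - sumv (sval g) - sumv (sval h) = - d by rewrite /d; ring.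
rewrite normrN; case=> [->|[]//]; rewrite normr0; exact: Dm_ge0.
Qed.

Definition iotaA (a : A) : FPG := exist _ (cons (inl a) [::]) (cons_letter_reduced (inl a) (isT : red [::])).
Definition iotaB (b : B) : FPG := exist _ (cons (inr b) [::]) (cons_letter_reduced (inr b) (isT : red [::])).

Lemma f_iotaA a : f (iotaA a) = fA a.
Proof.
rewrite f_sumv /=; case: eqP => [->|_]; rewrite ?fA1 /sumv ?big_nil ?big_cons ?big_nil //=.
by rewrite addr0.
Qed.

Lemma f_iotaB b : f (iotaB b) = fB b.
Proof.
rewrite f_sumv /=; case: eqP => [->|_]; rewrite ?fB1 /sumv ?big_nil ?big_cons ?big_nil //=.
by rewrite addr0.
Qed.

Lemma iotaA_mul a a' : fp_mul (iotaA a) (iotaA a') = iotaA (a * a')%g.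
Proof.
apply: fp_eq; change (F (cons (inl a') [::]) (cons (inl a) [::]) = cons (inl (a * a')%g) [::]).
rewrite -(@consAA A B _ _ _ (isT : red [::])).
case: (eqVneq a 1%g) => [->|a1] /=; first by rewrite eqxx.
by rewrite (negPf a1) /= ?(negPf a1).
Qed.

Lemma iotaB_mul b b' : fp_mul (iotaB b) (iotaB b') = iotaB (b * b')%g.
Proof.
apply: fp_eq; change (F (cons (inr b') [::]) (cons (inr b) [::]) = cons (inr (b * b')%g) [::]).
rewrite -(@consBB A B _ _ _ (isT : red [::])).
case: (eqVneq b 1%g) => [->|b1] /=; first by rewrite eqxx.
by rewrite (negPf b1) /= ?(negPf b1).
Qed.

Local Notation fh := (@hom _ (@fp_mul A B) (fp_one A B) R f).

Lemma fh_close g m : `|fh g - @useq _ (@fp_mul A B) (fp_one A B) R f g m.+1| <= Dm / m.+1%:R.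
Proof. exact: (@hom_close _ _ _ (@fp_mulA A B) (@fp_mul1 A B) (@fp_mulr1 A B) _ _ _ f_bound). Qed.

Lemma fh_conj x y : fh (fp_mul (fp_inv x) (fp_mul y x)) = fh y.
Proof.
exact: (@hom_conj _ _ _ _ (@fp_mulA A B) (@fp_mul1 A B) (@fp_mulr1 A B) (@fp_mulV A B) (@fp_mulVr A B) _ _ _ f_bound).
Qed.

Lemma F_cat s t : red (s ++ t) -> F t s = s ++ t.
Proof.
elim: s => [//|x s IH] r /=.
by rewrite IH ?(@reduced_cons A B _ _ r) // (@cons_prepend A B _ _ r).
Qed.

Lemma sumv_cat s t : sumv (s ++ t) = sumv s + sumv t.
Proof. by rewrite /sumv big_cat. Qed.

Lemma sumv_flatten n w : sumv (flatten (nseq n w)) = n%:R * sumv w.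
Proof.
elim: n => [|n IH]; first by rewrite /sumv big_nil mul0r.
by rewrite /= sumv_cat IH -[n.+1]addn1 natrD; ring.
Qed.

Lemma pow4 (x1 x2 x3 x4 : letter) (W : FPG) :
  sval W = [:: x1; x2; x3; x4] -> ~~ same_side x4 x1 ->
  forall n, sval (@gpow _ (@fp_mul A B) (fp_one A B) W n) = flatten (nseq n (sval W)).
Proof.
move=> eW ns; elim=> [//|n IH].
rewrite gpowS /= IH F_cat //.
have rW : red (sval W) by case: (W).
have rc := svalP (@gpow _ (@fp_mul A B) (fp_one A B) W n); rewrite IH in rc.
rewrite eW in rW rc *.
move: rW => /=; case/and3P => n1 r2 ns1; case/and3P: r2 => n2 r3 ns2.
case/and3P: r3 => n3 /andP[n4 _] ns3.
rewrite n1 n2 n3 n4 ns1 ns2 ns3 /= rc /=.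
by case: n {IH} rc => [|n] //= _; rewrite ns.
Qed.

Lemma hom4 (x1 x2 x3 x4 : letter) (W : FPG) :
  sval W = [:: x1; x2; x3; x4] -> ~~ same_side x4 x1 -> fh W = f W.
Proof.
move=> eW ns; apply/eqP; rewrite -subr_eq0; apply/eqP.
apply: (@norm_arch0 _ _ Dm) => m.
have := fh_close W m; rewrite /useq f_sumv (pow4 _ _ _ _ _ eW ns) sumv_flatten -f_sumv.
by rewrite mulrC mulKf // pnatr_eq0.
Qed.

Lemma lowA (p : B) (s0 t0 : A) : p != 1%g -> s0 != 1%g -> t0 != 1%g -> (s0 * t0)%g != 1%g ->
  exists g h : FPG,
    `|fh (fp_mul g h) - fh g - fh h| = 2%:R * `|fA (s0 * t0)%g - fA s0 - fA t0|.
Proof.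
move=> p1 s1 t1 m1.
have pi1 : (p^-1)%g != 1%g by rewrite invg_eq1.
pose m := (s0 * t0)%g.
have rg : red [:: inl t0; inr p; inl s0; inr p] by rewrite /= p1 s1 t1.
have rh : red [:: inr p^-1; inl t0; inr p; inl s0]%g by rewrite /= p1 s1 t1 pi1.
have rk : red [:: inr p; inl m; inr p; inl m] by rewrite /= p1 m1.
pose g : FPG := exist _ [:: inl t0; inr p; inl s0; inr p] rg.
pose h : FPG := exist _ [:: inr p^-1; inl t0; inr p; inl s0]%g rh.
pose k : FPG := exist _ [:: inr p; inl m; inr p; inl m] rk.
pose t := iotaA t0.
have hg : fh g = fA t0 + fB p + fA s0 + fB p.
  rewrite (hom4 (inl t0) (inr p) (inl s0) (inr p) g erefl) //.
  by rewrite f_sumv /sumv !big_cons big_nil /=; ring.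
have hh : fh h = fA t0 + fA s0.
  rewrite (hom4 (inr p^-1%g) (inl t0) (inr p) (inl s0) h erefl) //.
  by rewrite f_sumv /sumv !big_cons big_nil /= altB; ring.
have hk : fh k = fB p + fA m + fB p + fA m.
  rewrite (hom4 (inr p) (inl m) (inr p) (inl m) k erefl) //.
  by rewrite f_sumv /sumv !big_cons big_nil /=; ring.
have e1 : fp_mul (fp_mul g h) t = fp_mul t k.
  apply: fp_eq => /=.
  do 3 (rewrite ?(negPf t1, negPf p1, negPf s1, negPf m1, mulgV, eqxx) /=).
  done.
have hgh : fh (fp_mul g h) = fh k.
  rewrite -(fh_conj t (fp_mul g h)) e1 (@fp_mulA A B) (@fp_mulV A B) (@fp_mul1 A B).
  done.
exists g, h; rewrite hgh hk hg hh.
have -> : fB p + fA m + fB p + fA m - (fA t0 + fB p + fA s0 + fB p) - (fA t0 + fA s0)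
  = 2%:R * (fA m - fA s0 - fA t0) by ring.
by rewrite normrM ger0_norm.
Qed.

Lemma lowB (p : A) (s0 t0 : B) : p != 1%g -> s0 != 1%g -> t0 != 1%g -> (s0 * t0)%g != 1%g ->
  exists g h : FPG,
    `|fh (fp_mul g h) - fh g - fh h| = 2%:R * `|fB (s0 * t0)%g - fB s0 - fB t0|.
Proof.
move=> p1 s1 t1 m1.
have pi1 : (p^-1)%g != 1%g by rewrite invg_eq1.
pose m := (s0 * t0)%g.
have rg : red [:: inr t0; inl p; inr s0; inl p] by rewrite /= p1 s1 t1.
have rh : red [:: inl p^-1; inr t0; inl p; inr s0]%g by rewrite /= p1 s1 t1 pi1.
have rk : red [:: inl p; inr m; inl p; inr m] by rewrite /= p1 m1.
pose g : FPG := exist _ [:: inr t0; inl p; inr s0; inl p] rg.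
pose h : FPG := exist _ [:: inl p^-1; inr t0; inl p; inr s0]%g rh.
pose k : FPG := exist _ [:: inl p; inr m; inl p; inr m] rk.
pose t := iotaB t0.
have hg : fh g = fB t0 + fA p + fB s0 + fA p.
  rewrite (hom4 (inr t0) (inl p) (inr s0) (inl p) g erefl) //.
  by rewrite f_sumv /sumv !big_cons big_nil /=; ring.
have hh : fh h = fB t0 + fB s0.
  rewrite (hom4 (inl p^-1%g) (inr t0) (inl p) (inr s0) h erefl) //.
  by rewrite f_sumv /sumv !big_cons big_nil /= altA; ring.
have hk : fh k = fA p + fB m + fA p + fB m.
  rewrite (hom4 (inl p) (inr m) (inl p) (inr m) k erefl) //.
  by rewrite f_sumv /sumv !big_cons big_nil /=; ring.
have e1 : fp_mul (fp_mul g h) t = fp_mul t k.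
  apply: fp_eq => /=.
  do 3 (rewrite ?(negPf t1, negPf p1, negPf s1, negPf m1, mulgV, eqxx) /=).
  done.
have hgh : fh (fp_mul g h) = fh k.
  rewrite -(fh_conj t (fp_mul g h)) e1 (@fp_mulA A B) (@fp_mulV A B) (@fp_mul1 A B).
  done.
exists g, h; rewrite hgh hk hg hh.
have -> : fA p + fB m + fA p + fB m - (fB t0 + fA p + fB s0 + fA p) - (fB t0 + fB s0)
  = 2%:R * (fB m - fB s0 - fB t0) by ring.
by rewrite normrM ger0_norm.
Qed.

End FPqm.
Lemma defect_ub (R : realType) (G : Type) (mul : G -> G -> G) (f : G -> R) :
  is_quasimorphism mul f -> forall g h, `|f (mul g h) - f g - f h| <= defect mul f.
Proof.
move=> [M hM] g h; apply: ub_le_sup.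
  by exists M => r [x [y ->]].
by exists g, h.
Qed.

Lemma defect_le (R : realType) (G : Type) (mul : G -> G -> G) (f : G -> R) (g0 : G) (M : R) :
  (forall g h, `|f (mul g h) - f g - f h| <= M) -> defect mul f <= M.
Proof.
move=> hM; apply: ge_sup.
  by exists `|f (mul g0 g0) - f g0 - f g0|, g0, g0.
by move=> r [x [y ->]].
Qed.

Lemma hom_conv (A B : groupType) (R : realType) (f : free_product A B -> R) :
  homogenization f = @hom _ (@fp_mul A B) (fp_one A B) R f.
Proof. by []. Qed.

Arguments defect_ub {R G mul f}.
Arguments defect_le {R G mul f} g0 {M}.
Theorem theorem3p3 (R : realType) (A B : groupType)
  (fA : A -> R) (fB : B -> R)
  (A_nontriv : exists a : A, a != 1%g) (B_nontriv : exists b : B, b != 1%g)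
  (qA : is_quasimorphism (@monoid.mul A) fA) (qB : is_quasimorphism (@monoid.mul B) fB)
  (altA : alternating_qm (@monoid.inv A) fA) (altB : alternating_qm (@monoid.inv B) fB) :
  let f := split_qm fA fB in
  is_quasimorphism (@fp_mul A B) f /\
  gromov_norm_class (@fp_mul A B) f
    = defect (@fp_mul A B) (homogenization f) / 2 /\
  defect (@fp_mul A B) (homogenization f) / 2 = defect (@fp_mul A B) f /\
  defect (@fp_mul A B) f = Num.max (defect (@monoid.mul A) fA) (defect (@monoid.mul B) fB) /\
  (forall beta : free_product A B -> R, bounded_cochain beta ->
     defect (@fp_mul A B) f <= defect (@fp_mul A B) (f \+ beta)).
Proof.
move=> f.
have mulA := @fp_mulA A B; have mul1 := @fp_mul1 A B; have mulr1 := @fp_mulr1 A B.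
have mulV := @fp_mulV A B; have mulVr := @fp_mulVr A B.
set dA := defect (@monoid.mul A) fA; set dB := defect (@monoid.mul B) fB.
have hA : forall a a' : A, `|fA (a * a')%g - fA a - fA a'| <= dA := defect_ub qA.
have hB : forall b b' : B, `|fB (b * b')%g - fB b - fB b'| <= dB := defect_ub qB.
have fb := @f_bound A B R fA fB altA altB dA dB hA hB.
have qf : is_quasimorphism (@fp_mul A B) f by exists (Dm R dA dB).
set D := defect (@fp_mul A B) f.
have hDf := defect_ub qf.
have D_le : D <= Dm R dA dB := defect_le (fp_one A B) fb.
have dA_le : dA <= D.
  apply: ge_sup; first by exists `|fA (1 * 1)%g - fA 1%g - fA 1%g|, 1%g, 1%g.
  move=> r [a [a' ->]].
  rewrite -(@f_iotaA A B R fA fB altA a) -(@f_iotaA A B R fA fB altA a').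
  rewrite -(@f_iotaA A B R fA fB altA (a * a')%g) -iotaA_mul; exact: hDf.
have dB_le : dB <= D.
  apply: ge_sup; first by exists `|fB (1 * 1)%g - fB 1%g - fB 1%g|, 1%g, 1%g.
  move=> r [b [b' ->]].
  rewrite -(@f_iotaB A B R fA fB altB b) -(@f_iotaB A B R fA fB altB b').
  rewrite -(@f_iotaB A B R fA fB altB (b * b')%g) -iotaB_mul; exact: hDf.
have Dm_le : Dm R dA dB <= D by rewrite /Dm ge_max dA_le dB_le.
have DDm : D = Dm R dA dB by apply/le_anti; rewrite D_le Dm_le.
set H := homogenization f.
have hconv : H = @hom _ (@fp_mul A B) (fp_one A B) R f by [].
have hHdef : forall g h, `|H (fp_mul g h) - H g - H h| <= D + D.
  by rewrite hconv; exact: (@hom_def _ _ _ _ mulA mul1 mulr1 mulV mulVr _ _ _ hDf).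
have qH : is_quasimorphism (@fp_mul A B) H by exists (D + D).
set DH := defect (@fp_mul A B) H.
have hDH := defect_ub qH.
have DH_le : DH <= D + D := defect_le (fp_one A B) hHdef.
have DH0 : 0 <= DH := le_trans (normr_ge0 _) (hDH (fp_one A B) (fp_one A B)).
have lowerA : dA <= DH / 2%:R.
  apply: ge_sup; first by exists `|fA (1 * 1)%g - fA 1%g - fA 1%g|, 1%g, 1%g.
  move=> r [s0 [t0 ->]].
  have [p p1] := B_nontriv.
  have DH20 : 0 <= DH / 2%:R by rewrite divr_ge0.
  have [->|s1] := eqVneq s0 1%g.
    by rewrite mul1g (@fA1 _ _ _ altA) subr0 subrr normr0.
  have [->|t1] := eqVneq t0 1%g.
    by rewrite mulg1 (@fA1 _ _ _ altA) subr0 subrr normr0.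
  have [m1|m1] := eqVneq (s0 * t0)%g 1%g.
    rewrite m1 (@fA1 _ _ _ altA) sub0r -opprD (@fA_canc _ _ _ altA _ _ m1) oppr0 normr0 //.
  have [g [h e]] := @lowA A B R fA fB altA altB dA dB hA hB p s0 t0 p1 s1 t1 m1.
  have := hDH g h; rewrite hconv e => hh.
  by rewrite ler_pdivlMr ?ltr0n // mulrC.
have lowerB : dB <= DH / 2%:R.
  apply: ge_sup; first by exists `|fB (1 * 1)%g - fB 1%g - fB 1%g|, 1%g, 1%g.
  move=> r [s0 [t0 ->]].
  have [p p1] := A_nontriv.
  have DH20 : 0 <= DH / 2%:R by rewrite divr_ge0.
  have [->|s1] := eqVneq s0 1%g.
    by rewrite mul1g (@fA1 _ _ _ altB) subr0 subrr normr0.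
  have [->|t1] := eqVneq t0 1%g.
    by rewrite mulg1 (@fA1 _ _ _ altB) subr0 subrr normr0.
  have [m1|m1] := eqVneq (s0 * t0)%g 1%g.
    rewrite m1 (@fA1 _ _ _ altB) sub0r -opprD (@fA_canc _ _ _ altB _ _ m1) oppr0 normr0 //.
  have [g [h e]] := @lowB A B R fA fB altA altB dA dB hA hB p s0 t0 p1 s1 t1 m1.
  have := hDH g h; rewrite hconv e => hh.
  by rewrite ler_pdivlMr ?ltr0n // mulrC.
have DH2 : DH / 2%:R = D.
  apply/le_anti; apply/andP; split.
    by rewrite ler_pdivrMr ?ltr0n //; move: DH_le; rewrite mulr_natr mulr2n.
  by rewrite DDm /Dm ge_max lowerA lowerB.
have mini : forall beta : free_product A B -> R, bounded_cochain beta ->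
    D <= defect (@fp_mul A B) (f \+ beta).
  move=> beta [M hM].
  set psi := f \+ beta.
  have hpsi : forall g h, `|psi (fp_mul g h) - psi g - psi h| <= D + M + M + M.
    move=> g h; rewrite /psi /=.
    have -> : f (fp_mul g h) + beta (fp_mul g h) - (f g + beta g) - (f h + beta h)
      = (f (fp_mul g h) - f g - f h) + beta (fp_mul g h) - beta g - beta h by ring.
    apply: le_trans (ler_normB _ _) _; apply: lerD; last exact: hM.
    apply: le_trans (ler_normB _ _) _; apply: lerD; last exact: hM.
    apply: le_trans (ler_normD _ _) _; apply: lerD; [exact: hDf|exact: hM].
  have qpsi : is_quasimorphism (@fp_mul A B) psi by exists (D + M + M + M).
  set D' := defect (@fp_mul A B) psi.
  have hD' := defect_ub qpsi.
  have eqH : forall g, @hom _ (@fp_mul A B) (fp_one A B) R psi g = H g.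
    move=> g; apply/eqP; rewrite -subr_eq0; apply/eqP.
    apply: (@norm_arch0 _ _ (D' + M + D)) => m.
    have c1 := @hom_close _ _ _ mulA mul1 mulr1 _ _ _ hD' g m.
    have c2 := @hom_close _ _ _ mulA mul1 mulr1 _ _ _ hDf g m.
    rewrite -hconv in c2.
    have c3 : `|@useq _ (@fp_mul A B) (fp_one A B) R psi g m.+1
               - @useq _ (@fp_mul A B) (fp_one A B) R f g m.+1| <= M / m.+1%:R.
      rewrite /useq /psi /= -mulrBl addrC addKr normrM normfV normr_nat.
      by rewrite ler_pM2r ?invr_gt0 ?ltr0n.
    move: c1 c2 c3.
    set a := hom _ _ _ _ _ g; set u := useq _ _ _ _ _ g _; set v := useq _ _ _ _ _ g _.
    move=> c1 c2 c3.
    have : `|a - H g| <= `|a - u| + `|u - v| + `|H g - v|.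
      have -> : a - H g = (a - u) + (u - v) - (H g - v) by ring.
      by rewrite (le_trans (ler_normB _ _)) // lerD // ler_normD.
    have -> : (D' + M + D) / m.+1%:R = D' / m.+1%:R + M / m.+1%:R + D / m.+1%:R by rewrite !mulrDl.
    move: c1 c2 c3; rewrite -/D' -/D.
    set x1 := D' / _; set x2 := M / _; set x3 := D / _.
    lra.
  have hpd := @hom_def _ _ _ _ mulA mul1 mulr1 mulV mulVr _ _ _ hD'.
  have : DH <= D' + D'.
    apply: (defect_le (fp_one A B)) => g h.
    by rewrite -!eqH.
  move: DH2; set q := DH / 2%:R => DH2 hle.
  rewrite -DH2 /q ler_pdivrMr ?ltr0n // mulr_natr mulr2n //.
have S0 : [set r | exists beta : free_product A B -> R,
             bounded_cochain beta /\ r = defect (@fp_mul A B) (f \+ beta)] D.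
  exists (fun _ => 0); split; first by exists 0 => g; rewrite normr0.
  by congr defect; apply: funext => g /=; rewrite addr0.
have ginf : gromov_norm_class (@fp_mul A B) f = D.
  apply/le_anti; apply/andP; split.
    apply: ge_inf; last exact: S0.
    by exists D => r [beta [hb ->]]; exact: mini.
  apply: lb_le_inf; first by exists D.
  by move=> r [beta [hb ->]]; exact: mini.
split; first exact: qf.
split; first by rewrite ginf DH2.
split; first exact: DH2.
split; first exact: DDm.
exact: mini.
Qed.
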